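(* In the symmetric-erasure retransmission model described in the context, for every realization of the erasure variables, every vertex $v\in\mathcal V$ and every $t\ge 0$, there exists a time-like sequence of length $t$ ending at $v$ that has at least $t-n_v(t)$ erased steps.
   Context: Let $\mathcal G=(\mathcal V,\mathcal E)$ be a finite connected undirected simple graph with $N=|\mathcal V|$ vertices and maximum degree $\Delta$; $\mathcal N_v$ denotes the set of neighbours of $v$. Fix an erasure probability $p\in[0,1]$. Erasures are symmetric: for every undirected edge $e\in\mathcal E$ and every round $t\ge 1$ there is a random variable $S^e_t\in\{0,1\}$ with $P(S^e_t=1)=1-p$ ($S^e_t=1$ means the edge works in round $t$, $S^e_t=0$ means the packets in both directions on $e$ are erased in round $t$), and all these variables are mutually independent. The retransmission protocol for distributed consensus is described by integer state variables $n_{vu}(t)$, for every ordered pair $(v,u)$ with $u\in\mathcal N_v$ and every $t\ge 0$ (the index of the latest iterate of node $u$ available at node $v$ after round $t$), together with $n_v(t)=1+\min_{u\in\mathcal N_v} n_{vu}(t)$ (the number of iterations of the consensus update $x^v_{k+1}=x^v_k-\epsilon\sum_{u\in\mathcal N_v}(x^v_k-x^u_k)$ that node $v$ has completed after round $t$). Initially $n_{vu}(0)=-1$ for all such pairs (so $n_v(0)=0$), and for all $t\ge 0$ $$n_{vu}(t+1)=n_{vu}(t)+S^{\{u,v\}}_{t+1}\cdot\mathbf 1\{n_u(t)>n_{vu}(t)\}.$$ Node $u$ is said to transmit a ''wait'' to node $v$ in round $t+1$ iff $n_{vu}(t)=n_u(t)$. A time-like sequence of length $t$ ending at $v$ is a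 sequence of vertices $(w_t,w_{t-1},\dots,w_0)$ with $w_t=v$ such that for each $1\le\tau\le t$ either $w_\tau=w_{\tau-1}$ or $\{w_\tau,w_{\tau-1}\}\in\mathcal E$ (equivalently, a path in the ''trellis'' whose vertices are the copies $v_\tau$, $v\in\mathcal V$, $\tau\ge0$, and whose edges join $v_\tau$ and $u_{\tau-1}$ whenever $u=v$ or $\{u,v\}\in\mathcal E$). Its $\tau$-th step ($1\le\tau\le t$) is called erased if $w_\tau\ne w_{\tau-1}$ and $S^{\{w_\tau,w_{\tau-1}\}}_\tau=0$. *)

(* Defs.v *)
From HB Require Import structures.
From mathcomp Require Import all_boot all_order all_algebra.
Set Implicit Arguments. Unset Strict Implicit. Unset Printing Implicit Defensive.
Import Order.TTheory GRing.Theory Num.Theory.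
Local Open Scope ring_scope.

(* Erasure realization:
   S t u v : bool, S t u v = true means edge {u,v} works in round t
   (symmetry S t u v = S t v u is a hypothesis of the theorem). *)

(* minimum of f over the neighbours of u (only used when u has a neighbour;
   the seed of the fold is a neighbour, so the value is the true minimum) *)
Definition nbr_min (V : finType) (e : rel V) (f : V -> int) (u : V) : int :=
  match [pick w | e u w] with
  | Some w0 => \big[Order.min/f w0]_(w | e u w) f w
  | None => 0
  end.

Definition node_iter (V : finType) (e : rel V) (s : V -> V -> int) (u : V) : int :=
  1 + nbr_min e (s u) u.

(* state t v u = n_{vu}(t) *)
Fixpoint state (V : finType) (e : rel V) (S : nat -> V -> V -> bool) (t : nat)
  : V -> V -> int :=
  match t with
  | 0 => fun _ _ => -1
  | t'.+1 => fun v u =>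
      let s := state e S t' in
      s v u + ((S t'.+1 u v && (s v u < node_iter e s u)) : nat)%:Z
  end.

Definition n_node (V : finType) (e : rel V) (S : nat -> V -> V -> bool)
  (t : nat) (v : V) : int := node_iter e (state e S t) v.

Definition timelike (V : finType) (e : rel V) (t : nat) (v : V) (w : nat -> V) : Prop :=
  w t = v /\ (forall tau, (1 <= tau <= t)%N -> w tau = w tau.-1 \/ e (w tau) (w tau.-1)).

Definition n_erased (V : finType) (S : nat -> V -> V -> bool) (t : nat) (w : nat -> V) : nat :=
  (\sum_(1 <= tau < t.+1) ((w tau != w tau.-1) && ~~ S tau (w tau) (w tau.-1) : nat))%N.

(* Main.v *)
Require Import Defs.
From HB Require Import structures.
From mathcomp Require Import all_boot all_order all_algebra.
From mathcomp Require Import zify.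
Import Order.TTheory GRing.Theory Num.Theory.
Local Open Scope ring_scope.

Section S.
Variables (V : finType) (e : rel V) (S : nat -> V -> V -> bool).

Lemma nbr_min_le (f : V -> int) u w : e u w -> nbr_min e f u <= f w.
Proof.
move=> euw; rewrite /nbr_min; case: pickP => [w0 _|/(_ w)]; last by rewrite euw.
exact: bigmin_le_cond.
Qed.

Lemma nbr_min_arg (f : V -> int) u w : e u w -> exists2 x, e u x & nbr_min e f u = f x.
Proof.
move=> euw; rewrite /nbr_min; case: pickP => [w0 euw0|/(_ w)]; last by rewrite euw.
apply: (big_ind (fun y => exists2 x, e u x & y = f x)) => //; first by exists w0.
- move=> x y [x1 h1 ->] [y1 h2 ->]; rewrite /Order.min; case: ifP => _; by eauto.
- by move=> i ei; exists i.
Qed.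

Definition extw (t : nat) (y : V) (w : nat -> V) := fun k => if (k == t.+1)%N then y else w k.

Lemma ext_path t x y w : timelike e t x w -> (y = x \/ e y x) ->
  timelike e t.+1 y (extw t y w) /\
  n_erased S t.+1 (extw t y w) = (n_erased S t w + ((y != x) && ~~ S t.+1 y x))%N.
Proof.
move=> [wt hw] hyx; rewrite /extw; split.
  split; first by rewrite eqxx.
  move=> tau /andP[h1 h2]; case: (ltngtP tau t.+1) h2 => // [lt _|-> _].
    rewrite /= !ifN_eq ?(ltn_eqF lt) ?(ltn_eqF (leq_ltn_trans (leq_pred tau) lt)) //.
    by apply: hw; rewrite h1 -ltnS.
  by rewrite (ltn_eqF (ltnSn t)) wt.
rewrite /n_erased big_nat_recr //= eqxx (ltn_eqF (ltnSn t)) wt.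
congr (_ + _)%N; apply: eq_big_nat => tau /andP[_ lt].
by rewrite (ltn_eqF lt) (ltn_eqF (leq_ltn_trans (leq_pred tau) lt)).
Qed.
Hypotheses (e_sym : symmetric e) (e_irr : irreflexive e)
  (S_sym : forall t u v, S t u v = S t v u) (hnb : forall u, exists x, e u x).

Definition Rprop t := forall v u, e v u -> exists w, timelike e t v w /\
  t%:Z - 1 - Order.min (state e S t v u) (state e S t u v) <= (n_erased S t w)%:Z.
Definition Pprop t := forall u, exists w, timelike e t u w /\
  t%:Z - node_iter e (state e S t) u <= (n_erased S t w)%:Z.

Lemma RP t : Rprop t -> Pprop t.
Proof.
move=> hR u; have [x eux] := hnb u.
have [y euy hy] := nbr_min_arg (state e S t u) u x eux.
have [w [tw hw]] := hR u y euy; exists w; split => //.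
move: hw; rewrite /node_iter hy; lia.
Qed.

Lemma stay t x w : timelike e t x w ->
  timelike e t.+1 x (extw t x w) /\ n_erased S t.+1 (extw t x w) = n_erased S t w.
Proof.
move=> tw; have [h1 h2] := ext_path _ _ x _ tw (or_introl erefl).
by rewrite h2 eqxx addn0.
Qed.

Lemma Rall t : Rprop t.
Proof.
elim: t => [|t IH].
  move=> v u _; exists (fun _ => v); split.
    by split => // tau /andP[h1 h2]; move: (leq_trans h1 h2).
  by rewrite /=; lia.
have IP := RP _ IH.
move=> v u evu.
have vu : (v != u) by apply/eqP => E; move: evu; rewrite E e_irr.
rewrite /= -(S_sym t.+1 u v).
set a := state e S t v u; set b := state e S t u v.
set nu := node_iter e (state e S t) u; set nv := node_iter e (state e S t) v.
case Sb: (S t.+1 u v) => /=.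
- case: (boolP (a < nu)%R) => hA; case: (boolP (b < nv)%R) => hB; rewrite /=;
  rewrite -?leNgt in hA hB;
  case: (boolP (Order.min a b + 1 <= nu)%R) => h1;
  case: (boolP (Order.min a b + 1 <= nv)%R) => h2;
  case: (boolP (nu <= nv)%R) => h3; rewrite -?ltNge in h1 h2 h3.
  all: try (have [w [tw hw]] := IH v u evu; have [tw' Ew] := stay _ _ _ tw; exists (extw t v w); rewrite Ew;
      split => //; move: hw; rewrite -/a -/b; lia).
  all: try (have [w [tw hw]] := IP u; have [tw' Ew] := ext_path _ _ v _ tw (or_intror evu);
      exists (extw t v w); rewrite Ew; split => //; rewrite -(S_sym t.+1 u v) Sb andbF addn0;
      move: hw; rewrite -/nu; lia).
  all: try (have [w [tw hw]] := IP v; have [tw' Ew] := stay _ _ _ tw; exists (extw t v w); rewrite Ew;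
      split => //; move: hw; rewrite -/nv; lia).
- rewrite !addr0.
  have euv : e u v by rewrite e_sym.
  have [w [tw hw]] := IH u v euv.
  have [tw' Ew] := ext_path _ _ v _ tw (or_intror evu).
  exists (extw t v w); rewrite Ew; split => //.
  rewrite -(S_sym t.+1 u v) Sb vu /=.
  move: hw; rewrite -/a -/b; lia.
Qed.
End S.

Theorem lemma5 (V : finType) (e : rel V)
  (e_sym : symmetric e) (e_irr : irreflexive e)
  (e_conn : forall x y : V, connect e x y) (hN : (1 < #|V|)%N)
  (S : nat -> V -> V -> bool)
  (S_sym : forall t u v, S t u v = S t v u)
  (v : V) (t : nat) :
  exists w : nat -> V, timelike e t v w /\
    (t%:Z - n_node e S t v <= (n_erased S t w)%:Z).
Proof.
have hnb : forall u, exists x, e u x.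
  move=> u.
  have : (0 < #|predC1 u|)%N by rewrite cardC1; lia.
  case/card_gt0P => x; rewrite !inE => xu.
  case/connectP: (e_conn u x) => [[|y p]] /=; first by move=> _ E; rewrite E eqxx in xu.
  by case/andP => euy _ _; exists y.
have [w [tw hw]] := @RP V e S hnb t (@Rall V e S e_sym e_irr S_sym hnb t) v.
by exists w.
Qed.
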